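(* Let $(E,\mathcal{L},g)$ be a uniform affine oriented matroid with $|E|>1$ such that every maximal element of its bounded complex $\mathcal{L}^{++}$ is a tope of $\mathcal{L}$, and such that $X\backslash g\neq 0$ for every $X\in\mathcal{L}^+$. Then for $X\in\mathcal{L}^+$: $X\backslash g\in\mathcal{L}/g$ if and only if $X\notin\mathcal{L}^{++}$.
   Context: An oriented matroid $(E,\mathcal{L})$ is given by covectors $\mathcal{L}\subseteq\{+,-,0\}^E$ satisfying the standard covector axioms, ordered componentwise by $0<+$, $0<-$; topes are maximal covectors. Uniform: the underlying matroid (flats $z(X)=\{e:X_e=0\}$, $X\in\mathcal{L}$) of rank $r$ has every $r$-subset of $E$ as a basis. An affine oriented matroid $(E,\mathcal{L},g)$ has a distinguished non-loop $g\in E$; $\mathcal{L}^+=\{X\in\mathcal{L}:X_g=+\}$; bounded complex $\mathcal{L}^{++}=\{X\in\mathcal{L}^+:\ \text{all } 0\neq Y\le X \text{ in } \mathcal{L} \text{ have } Y_g=+\}$. For a sign vector $X\in\{+,-,0\}^E$, $X\backslash g$ denotes its restriction to $E\setminus\{g\}$. The contraction is $\mathcal{L}/g=\{Y\backslash g: Y\in\mathcal{L},\ Y_g=0\}$, an oriented matroid on $E\setminus\{g\}$. *)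

(* Defs.v *)
From HB Require Import structures.
From mathcomp Require Import all_boot.
Set Implicit Arguments. Unset Strict Implicit. Unset Printing Implicit Defensive.

Inductive sign := Zero | Plus | Minus.

Definition sign_enc (s : sign) : 'I_3 :=
  match s with Zero => inord 0 | Plus => inord 1 | Minus => inord 2 end.
Definition sign_dec (i : 'I_3) : option sign :=
  match val i with 0 => Some Zero | 1 => Some Plus | _ => Some Minus end.
Lemma sign_encK : pcancel sign_enc sign_dec.
Proof. by case; rewrite /sign_dec /= inordK. Qed.
HB.instance Definition _ := Finite.copy sign (pcan_type sign_encK).

Definition sopp (s : sign) : sign :=
  match s with Zero => Zero | Plus => Minus | Minus => Plus end.

Section OM.
Variable E : finType.
Definition svec := {ffun E -> sign}.

Definition szero : svec := [ffun => Zero].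
Definition sneg (X : svec) : svec := [ffun e => sopp (X e)].
Definition scomp (X Y : svec) : svec :=
  [ffun e => if X e == Zero then Y e else X e].
Definition ssep (X Y : svec) : {set E} :=
  [set e | (X e != Zero) && (Y e == sopp (X e))].
Definition zset (X : svec) : {set E} := [set e | X e == Zero].
Definition sle (Y X : svec) : bool := [forall e, (Y e == Zero) || (Y e == X e)].

Definition is_OM (L : {set svec}) : Prop :=
  [/\ szero \in L,
      (forall X, X \in L -> sneg X \in L),
      (forall X Y, X \in L -> Y \in L -> scomp X Y \in L) &
      (forall X Y e, X \in L -> Y \in L -> e \in ssep X Y ->
         exists2 Z, Z \in L & Z e = Zero /\
           forall f, f \notin ssep X Y -> Z f = scomp X Y f)].

(* underlying matroid: flats are the zero sets of covectors *)
Definition is_flat (L : {set svec}) (F : {set E}) : bool :=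
  [exists X in L, zset X == F].
Definition mclosure (L : {set svec}) (A : {set E}) : {set E} :=
  \bigcap_(F | is_flat L F && (A \subset F)) F.
Definition mindep (L : {set svec}) (I : {set E}) : bool :=
  [forall i in I, i \notin mclosure L (I :\ i)].
Definition mbasis (L : {set svec}) (B : {set E}) : bool :=
  mindep L B && [forall B' : {set E}, (B \proper B') ==> ~~ mindep L B'].
Definition uniform (L : {set svec}) : Prop :=
  exists r : nat, (exists B, mbasis L B /\ #|B| = r) /\
                  (forall B : {set E}, #|B| = r -> mbasis L B).

Definition is_tope (L : {set svec}) (X : svec) : Prop :=
  X \in L /\ forall Y, Y \in L -> sle X Y -> Y = X.

Definition nonloop (L : {set svec}) (g : E) : Prop := exists2 X, X \in L & X g != Zero.
Definition Lplus (L : {set svec}) (g : E) (X : svec) : Prop := X \in L /\ X g = Plus.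
Definition Lpp (L : {set svec}) (g : E) (X : svec) : Prop :=
  Lplus L g X /\ forall Y, Y \in L -> Y != szero -> sle Y X -> Y g = Plus.
Definition Lpp_maximal (L : {set svec}) (g : E) (X : svec) : Prop :=
  Lpp L g X /\ forall Y, Lpp L g Y -> sle X Y -> Y = X.
Definition restr_nonzero (g : E) (X : svec) : Prop := exists2 e, e != g & X e != Zero.
Definition in_contraction (L : {set svec}) (g : E) (X : svec) : Prop :=
  exists2 Y, Y \in L & Y g = Zero /\ forall e, e != g -> Y e = X e.
End OM.

(* Main.v *)
Require Import Defs.
From mathcomp Require Import all_boot.
From mathcomp Require Import zify.
From Stdlib Require Import Lia.
Set Implicit Arguments. Unset Strict Implicit. Unset Printing Implicit Defensive.

Section S.
Variable E : finType.
Implicit Types (L : {set svec E}) (X Y W U V : svec E) (A B C : {set E}).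

Lemma sub_card (A : {set E}) k : k <= #|A| -> exists2 C : {set E}, C \subset A & #|C| = k.
Proof.
elim: k => [|k IH] H; first by exists set0; rewrite ?sub0set ?cards0.
have [C CA Ck] := IH (ltnW H).
have : 0 < #|A :\: C| by rewrite cardsD (setIidPr CA) Ck subn_gt0.
case/card_gt0P => x; rewrite inE => /andP[xC xA].
exists (x |: C); first by rewrite subUset sub1set xA.
by rewrite cardsU1 xC Ck.
Qed.

Lemma clP L A x :
  reflect (forall W, W \in L -> A \subset zset W -> W x = Zero) (x \in mclosure L A).
Proof.
apply: (iffP bigcapP) => [H W WL AW|H F /andP[/existsP[W /andP[WL /eqP <-]] AW]].
  have := H (zset W); rewrite inE AW andbT => /(_ _) /eqP; apply.
  by apply/existsP; exists W; rewrite WL eqxx.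
by rewrite inE; apply/eqP; apply: H.
Qed.

Lemma clNP L A x : x \notin mclosure L A ->
  exists2 W : svec E, W \in L & A \subset zset W /\ W x != Zero.
Proof.
move=> H; case: (boolP [exists W, [&& W \in L, A \subset zset W & W x != Zero]]).
  by case/existsP => W /and3P[? ? ?]; exists W.
move=> HN; case/negP: H; apply/clP => W WL AW; move/existsPn: HN => HN.
by have := HN W; rewrite WL AW /= negbK => /eqP.
Qed.

Definition seqb (a b : sign) := match a, b with
  Zero, Zero | Plus, Plus | Minus, Minus => true | _, _ => false end.
Lemma seqE (a b : sign) : (a == b) = seqb a b.
Proof. by apply/eqP/idP; case: a; case: b. Qed.

Lemma sopp_neq s : s != Zero -> sopp s != s.
Proof. by rewrite !seqE; case: s. Qed.

Lemma exchange L A i y : is_OM L ->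
  i \notin mclosure L A -> i \in mclosure L (y |: A) -> y \in mclosure L (i |: A).
Proof.
case=> _ Lneg Lcomp Lelim /clNP [V0 V0L [AV0 V0i]] /clP Hiy; apply/clP => W WL AW.
apply/eqP; apply: contraT => Wy.
have AW' : A \subset zset W by apply: subset_trans AW; apply: subsetUr.
have Wi : W i = Zero by move/subsetP: AW => /(_ i); rewrite !inE eqxx => /(_ isT) /eqP.
pose V := scomp V0 W.
have VL : V \in L by apply: Lcomp.
have AV : A \subset zset V.
  apply/subsetP => f fA; move/subsetP: AV0 => /(_ f fA); move/subsetP: AW' => /(_ f fA).
  by rewrite !inE /V ffunE => /eqP -> /eqP ->; rewrite eqxx.
have Vi : V i != Zero by rewrite /V ffunE (negbTE V0i).
have Vy : V y != Zero by rewrite /V ffunE; case: (V0 y =P Zero) => // /eqP.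
pose W' := if W y == sopp (V y) then W else sneg W.
have W'L : W' \in L by rewrite /W'; case: ifP => // _; apply: Lneg.
have W'y : W' y = sopp (V y).
  rewrite /W'; case: eqP => // /eqP h; rewrite ffunE.
  by move: h Wy Vy; rewrite !seqE; case: (W y); case: (V y).
have W'z : forall f, W f = Zero -> W' f = Zero.
  by move=> f h; rewrite /W'; case: ifP => _; rewrite ?ffunE h.
pose Q := scomp W' V.
have QL : Q \in L by apply: Lcomp.
have yS : y \in ssep V Q by rewrite inE Vy /Q ffunE W'y; move: Vy; rewrite !seqE; case: (V y).
have [Z ZL [Zy HZ]] := Lelim _ _ _ VL QL yS.
have : Z i = Zero.
  apply: (Hiy Z ZL); apply/subsetP => f; rewrite !inE => /orP[/eqP->|fA]; first by rewrite Zy.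
  have fV : V f = Zero by move/subsetP: AV => /(_ f fA); rewrite inE => /eqP.
  have fW : W f = Zero by move/subsetP: AW' => /(_ f fA); rewrite inE => /eqP.
  rewrite HZ; last by rewrite inE fV eqxx.
  by rewrite ffunE fV eqxx /Q ffunE W'z ?fV ?eqxx.
rewrite HZ.
  by rewrite ffunE (negbTE Vi) => h; move: Vi; rewrite h eqxx.
rewrite inE negb_and Vi /= /Q ffunE W'z // eqxx.
by move: Vi; rewrite !seqE; case: (V i).
Qed.

Lemma basis_cl L C y : is_OM L -> mbasis L C -> y \in mclosure L C.
Proof.
move=> OM /andP[iC /forallP mx].
case: (boolP (y \in C)) => yC.
  by apply/clP => W _ /subsetP /(_ y yC); rewrite inE => /eqP.
have : C \proper y |: C by rewrite properUr // sub1set.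
move/implyP: (mx (y |: C)) => h /h; rewrite /mindep negb_forall_in.
case/exists_inP => i; rewrite !inE => /orP[/eqP ->|iC']; rewrite negbK.
  by rewrite setU1K.
move=> hi.
have iy : i != y by apply: contraNneq yC => <-.
move/forall_inP: iC => /(_ i iC') hni.
have := exchange OM hni; rewrite setD1K //; apply.
have -> : y |: C :\ i = (y |: C) :\ i; last by [].
apply/setP => z; rewrite !inE; case: (z =P i) => [->|_] /=; last by [].
by rewrite (negbTE iy).
Qed.

Lemma zset_small L r W : is_OM L -> (forall B : {set E}, #|B| = r -> mbasis L B) ->
  W \in L -> r <= #|zset W| -> forall e, W e = Zero.
Proof.
move=> OM Hb WL Hr e.
have [C CW Cr] := sub_card Hr.
have := basis_cl e OM (Hb _ Cr); move/clP; apply => //.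
Qed.

Lemma find_cov L r A x : is_OM L -> (forall B : {set E}, #|B| = r -> mbasis L B) ->
  r <= #|E| -> #|A| < r -> x \notin A ->
  exists2 U : svec E, U \in L & A \subset zset U /\ U x != Zero.
Proof.
move=> OM Hb HE HA xA.
set S := x |: A.
have HS : #|S| <= r by rewrite cardsU1 xA.
have : r - #|S| <= #|~: S| by have := cardsC S; lia.
case/sub_card => C CS Cc.
have dis : [disjoint S & C].
  by rewrite disjoint_sym disjoints_subset.
have Bc : #|S :|: C| = r.
  rewrite cardsU; move: dis; rewrite -setI_eq0 => /eqP ->; rewrite cards0 Cc; lia.
move: (Hb _ Bc) => /andP[/forall_inP /(_ x) H _].
have xB : x \in S :|: C by rewrite !inE eqxx.
apply: clNP; apply: contra (H xB) => /clP h; apply/clP => W WL BW.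
apply: (h W WL); apply: subset_trans BW; apply/subsetP => z zA; rewrite !inE.
by rewrite zA orbT andbT; apply: contraNneq xA => <-.
Qed.

Lemma sleP Y X : reflect (forall e, Y e = Zero \/ Y e = X e) (sle Y X).
Proof.
apply: (iffP forallP) => H e; first by case/orP: (H e) => /eqP; auto.
by case: (H e) => ->; rewrite eqxx ?orbT.
Qed.

Lemma lift L r : is_OM L -> (forall B : {set E}, #|B| = r -> mbasis L B) ->
  r <= #|E| -> forall n Y W, Y \in L -> (exists e, Y e != Zero) -> sle Y W ->
  #|[set e | (Y e == Zero) && (W e != Zero)]| = n -> W \in L.
Proof.
move=> OM Hb HE n; elim: n => [|n IH] Y W YL [e0 Ye0] /sleP YW Hn.
  suff -> : W = Y by [].
  apply/ffunP => e; case: (YW e) => // Ye.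
  move/eqP: Hn; rewrite cards_eq0 => /eqP /setP /(_ e); rewrite !inE Ye eqxx /=.
  by move/negbFE/eqP.
have : 0 < #|[set e | (Y e == Zero) && (W e != Zero)]| by rewrite Hn.
case/card_gt0P => e; rewrite inE => /andP[/eqP Ye We].
have zs : #|zset Y| < r.
  rewrite ltnNge; apply/negP => h.
  by move: Ye0; rewrite (zset_small OM Hb YL h) eqxx.
have eA : e \notin zset Y :\ e by rewrite !inE eqxx.
have HA : #|zset Y :\ e| < r.
  by apply: leq_ltn_trans zs; apply: subset_leq_card; apply: subsetDl.
have [U0 U0L [AU U0e]] := find_cov OM Hb HE HA eA.
case: OM => _ Lneg Lcomp _.
pose U := if U0 e == W e then U0 else sneg U0.
have UL : U \in L by rewrite /U; case: ifP => // _; apply: Lneg.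
have Ue : U e = W e.
  rewrite /U; case: eqP => // /eqP h; rewrite ffunE.
  by move: h U0e We; rewrite !seqE; case: (U0 e); case: (W e).
have Uz : forall f, f != e -> Y f = Zero -> U f = Zero.
  move=> f fe Yf; have : f \in zset Y :\ e by rewrite !inE fe Yf eqxx.
  move/(subsetP AU); rewrite inE => /eqP h.
  by rewrite /U; case: ifP => _; rewrite ?ffunE h.
apply: (IH (scomp Y U)) => //; first by apply: Lcomp.
- by exists e0; rewrite ffunE (negbTE Ye0).
- apply/sleP => f; rewrite ffunE; case: (Y f =P Zero) => Yf; last by case: (YW f).
  case: (f =P e) => [->|/eqP fe]; first by rewrite Ue; right.
  by left; apply: Uz.
- apply/eqP; rewrite -eqSS -Hn (cardsD1 e [set e0 | (Y e0 == Zero) && (W e0 != Zero)]) inE Ye eqxx We /=; apply/eqP; congr (_.+1).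
  apply: eq_card => f; rewrite !inE ffunE.
  case: (f =P e) => [->|/eqP fe] /=; first by rewrite Ye eqxx Ue; case: (W e == Zero).
  case: (Y f =P Zero) => Yf /=; last by rewrite (introF eqP Yf).
  by rewrite Uz // eqxx.
Qed.
End S.

Lemma nz_ex (E : finType) (Y : svec E) : Y != szero E -> exists e, Y e != Zero.
Proof.
move=> Y0; case: (boolP [exists e, Y e != Zero]) => [/existsP//|/existsPn h].
by case/eqP: Y0; apply/ffunP => e; rewrite ffunE; move/negbNE/eqP: (h e).
Qed.

Theorem corollary4p3 (E : finType) (L : {set svec E}) (g : E) :
  is_OM L -> uniform L -> nonloop L g -> 1 < #|E| ->
  (forall X, Lpp_maximal L g X -> is_tope L X) ->
  (forall X, Lplus L g X -> restr_nonzero g X) ->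
  forall X, Lplus L g X -> (in_contraction L g X <-> ~ Lpp L g X).
Proof.
move=> OM [r [[B0 [_ B0r]] Hb]] _ _ _ Hnz X [XL Xg]; split.
  case=> Y YL [Yg YX] [_ H].
  have [e eg Xe] := Hnz X (conj XL Xg).
  have Y0 : Y != szero E.
    by apply/eqP => Y0; move: Xe; rewrite -YX // Y0 ffunE eqxx.
  have : sle Y X.
    apply/sleP => f; case: (f =P g) => [->|/eqP fg]; [left|right; apply: YX] => //.
  by move/(H Y YL Y0); rewrite Yg.
move=> nL.
case: (boolP [exists Y, [&& Y \in L, Y != szero E, sle Y X & Y g != Plus]]).
  case/existsP => Y /and4P[YL Y0 YX Yg].
  have Yg0 : Y g = Zero.
    by case: (sleP _ _ YX g) => // h; move: Yg; rewrite h Xg eqxx.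
  pose W := [ffun e => if e == g then Zero else X e].
  have rE : r <= #|E| by rewrite -B0r; apply: max_card.
  have YW : sle Y W.
    apply/sleP => f; rewrite ffunE; case: (f =P g) => [->|_]; first by left.
    exact: (sleP _ _ YX f).
  have WL := lift OM Hb rE YL (nz_ex Y0) YW erefl.
  exists W => //; split; first by rewrite ffunE eqxx.
  by move=> e eg; rewrite ffunE (negbTE eg).
move/existsPn => HN; exfalso; apply: nL; split => // Y YL Y0 YX.
by have := HN Y; rewrite YL Y0 YX /= negbK => /eqP.
Qed.
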